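(* Let $\mu,\varepsilon,\nu,\Omega,\omega$ be real or complex parameters with $\mu\neq 0$ and $\nu\notin\{2,3,4,\dots\}$, and consider the grand confluent hypergeometric (GCH) equation $$x\,y''(x)+\left(\mu x^2+\varepsilon x+\nu\right)y'(x)+\left(\Omega x+\varepsilon\omega\right)y(x)=0 .$$ Put $\gamma=\tfrac12(1+\nu)$, $a=\frac{\Omega}{2\mu}$, $\tilde\varepsilon=-\tfrac12\varepsilon x$ and $z=-\tfrac12\mu x^2$, and assume $1-a$ is not a nonpositive integer. Then the function $$ \begin{aligned} y(x)=RW\Big(\omega,\gamma;\tilde\varepsilon;z\Big)=z^{1-\gamma}\frac{\Gamma(1-a)}{\Gamma(2-\gamma)}\Bigg\{&\sum_{i_0=0}^{\infty}\frac{(a+1-\gamma)_{i_0}}{(1)_{i_0}(2-\gamma)_{i_0}}z^{i_0}\\ &+\Bigg\{\sum_{i_0=0}^{\infty}\frac{(i_0+1-\gamma+\frac{\omega}{2})}{(i_0+\frac12)(i_0+\frac32-\gamma)}\frac{(a+1-\gamma)_{i_0}}{(1)_{i_0}(2-\gamma)_{i_0}}\sum_{i_1=i_0}^{\infty}\frac{(a+\frac32-\gamma)_{i_1}(\frac32)_{i_0}(\frac52-\gamma)_{i_0}}{(a+\frac32-\gamma)_{i_0}(\frac32)_{i_1}(\frac52-\gamma)_{i_1}}z^{i_1}\Bigg\}\tilde\varepsilon\\ &+\sum_{n=2}^{\infty}\Bigg\{\sum_{i_0=0}^{\infty}\frac{(i_0+1-\gamma+\frac{\omega}{2})}{(i_0+\frac12)(i_0+\frac32-\gamma)}\frac{(a+1-\gamma)_{i_0}}{(1)_{i_0}(2-\gamma)_{i_0}}\\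 &\quad\times\prod_{k=1}^{n-1}\Bigg\{\sum_{i_k=i_{k-1}}^{\infty}\frac{(i_k+1-\gamma+\frac{\omega}{2}+\frac k2)}{(i_k+\frac12+\frac k2)(i_k+\frac32-\gamma+\frac k2)}\frac{(a+1-\gamma+\frac k2)_{i_k}(1+\frac k2)_{i_{k-1}}(2-\gamma+\frac k2)_{i_{k-1}}}{(a+1-\gamma+\frac k2)_{i_{k-1}}(1+\frac k2)_{i_k}(2-\gamma+\frac k2)_{i_k}}\Bigg\}\\ &\quad\times\sum_{i_n=i_{n-1}}^{\infty}\frac{(a+1-\gamma+\frac n2)_{i_n}(1+\frac n2)_{i_{n-1}}(2-\gamma+\frac n2)_{i_{n-1}}}{(a+1-\gamma+\frac n2)_{i_{n-1}}(1+\frac n2)_{i_n}(2-\gamma+\frac n2)_{i_n}}z^{i_n}\Bigg\}\tilde\varepsilon^{\,n}\Bigg\} \end{aligned} $$ is the power series expansion about $x=0$ of a solution (the solution of the second kind, corresponding to the indicial root $\lambda=1-\nu=2(1-\gamma)$) of the GCH equation.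
   Context: $(x)_n=\Gamma(x+n)/\Gamma(x)$ denotes the Pochhammer symbol (rising factorial), and for integers $m\ge n\ge 0$ a quotient $(b)_m/(b)_n$ is understood as $\prod_{j=n}^{m-1}(b+j)$. In the term with index $n\ge 2$, the product over $k=1,\dots,n-1$ denotes nested summation: the sum over $i_k$ runs from $i_{k-1}$ to $\infty$, with $i_{k-1}$ the summation index of the previous level, and the innermost sum over $i_n$ runs from $i_{n-1}$ to $\infty$. The factor $z^{1-\gamma}$ equals $\left(-\tfrac12\mu\right)^{1-\gamma}x^{2(1-\gamma)}$ for a fixed choice of branch. *)

(* Defs.v *)
From mathcomp Require Import all_boot all_order all_algebra.
Set Implicit Arguments. Unset Strict Implicit. Unset Printing Implicit Defensive.
Import Order.TTheory GRing.Theory Num.Theory.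
Local Open Scope ring_scope.

Section GCH.
Variable C : numClosedFieldType.

(* A formal series with a fixed (possibly non-integer) leading exponent lam is
   represented by its coefficient function c : int -> C, meaning
   sum_k c k * x^(k + lam).  Derivative and multiplication by x keep the same
   reference exponent lam. *)
Definition fser := int -> C.

(* d/dx : sum c_k x^(k+lam) |-> sum c_k (k+lam) x^(k+lam-1)
         = sum_k (k+1+lam) c_(k+1) x^(k+lam) *)
Definition fderiv (lam : C) (c : fser) : fser :=
  fun k => (((k + 1)%R)%:~R + lam) * c (k + 1)%R.

Definition fmulx (c : fser) : fser := fun k => c (k - 1)%R.

Definition gch_formal_solution (mu eps nu Om om lam : C) (c : fser) : Prop :=
  forall k : int,
    fmulx (fderiv lam (fderiv lam c)) k
    + (mu * fmulx (fmulx (fderiv lam c)) k + eps * fmulx (fderiv lam c) k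
       + nu * fderiv lam c k)
    + (Om * fmulx c k + eps * om * c k) = 0.

(* (b)_m / (b)_n  understood as  prod_{j=n}^{m-1} (b + j) *)
Definition pochq (b : C) (n m : nat) : C := \prod_(n <= j < m) (b + j%:R).
Definition poch (b : C) (n : nat) : C := pochq b 0 n.

Variables (mu eps nu Om om : C).

Definition gch_gamma : C := (1 + nu) / 2.
Definition gch_a : C := Om / (2 * mu).

(* level-k ratio  (a+1-g+k/2)_q (1+k/2)_p (2-g+k/2)_p /
                  ((a+1-g+k/2)_p (1+k/2)_q (2-g+k/2)_q)      (p <= q)
   For k = 0, p = 0 this is (a+1-g)_q / ((1)_q (2-g)_q). *)
Definition rwQ (k p q : nat) : C :=
  let g := gch_gamma in let a := gch_a in
  pochq (a + 1 - g + k%:R / 2) p q /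
  (pochq (1 + k%:R / 2) p q * pochq (2 - g + k%:R / 2) p q).

Definition rwW (k i : nat) : C :=
  let g := gch_gamma in
  (i%:R + 1 - g + om / 2 + k%:R / 2) /
  ((i%:R + 1 / 2 + k%:R / 2) * (i%:R + 3 / 2 - g + k%:R / 2)).

(* rwV n N = coefficient of z^N in the n-th bracket (the coefficient of
   etilde^n):  the nested sums over 0 <= i_0 <= i_1 <= ... <= i_n = N. *)
Fixpoint rwV (n N : nat) : C :=
  match n with
  | 0 => rwQ 0 0 N
  | n'.+1 => \sum_(i < N.+1) rwV n' i * rwW n' i * rwQ n'.+1 i N
  end.

(* Coefficients of y(x) = K * x^(2(1-g)) * sum_n etilde^n sum_N rwV n N z^N
   with etilde = -(eps/2) x, z = -(mu/2) x^2, collected by powers of x: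
   the coefficient of x^(m + 2(1-g)) is
   K * sum_{n + 2N = m} (-eps/2)^n (-mu/2)^N rwV n N. *)
Definition rw_coef (K : C) : fser :=
  fun k => match k with
  | Posz m => K * \sum_(n < m.+1) \sum_(N < m.+1 | (n + 2 * N)%N == m)
                 (- (eps / 2)) ^+ n * (- (mu / 2)) ^+ N * rwV n N
  | Negz _ => 0
  end.

End GCH.

(* Main.v *)
Require Import Defs.
From mathcomp Require Import all_boot all_order all_algebra.
From mathcomp Require Import zify ring lra.
Import Order.TTheory GRing.Theory Num.Theory.
Local Open Scope ring_scope.

Section S.
Variable C : numClosedFieldType.
Variables (mu nu Om om : C).
Hypothesis hnu : forall n : nat, (2 <= n)%N -> nu != n%:R.

Lemma pochq_nn (b : C) n : pochq b n n = 1.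
Proof. by rewrite /pochq big_geq. Qed.

Lemma pochq_S (b : C) p q : (p <= q)%N -> pochq b p q.+1 = pochq b p q * (b + q%:R).
Proof. by move=> h; rewrite /pochq big_nat_recr. Qed.

Let g := gch_gamma nu.
Let a := gch_a mu Om.

Definition rr (k q : nat) : C :=
  (a + 1 - g + k%:R / 2 + q%:R) / ((1 + k%:R / 2 + q%:R) * (2 - g + k%:R / 2 + q%:R)).

Lemma Q_nn k p : rwQ mu nu Om k p p = 1.
Proof. by rewrite /rwQ !pochq_nn mulr1 divr1. Qed.

Lemma Q_S k p q : (p <= q)%N -> rwQ mu nu Om k p q.+1 = rwQ mu nu Om k p q * rr k q.
Proof.
move=> h; rewrite /rwQ /rr !pochq_S // -/g -/a.
rewrite !invfM; ring.
Qed.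

Notation V := (rwV mu nu Om om).
Notation W := (rwW nu om).

Lemma Vrec n N : V n N.+1 = V n N * rr n N +
   (if n is n'.+1 then V n' N.+1 * W n' N.+1 else 0).
Proof.
case: n => [|n] /=.
  by rewrite Q_S // addr0.
rewrite big_ord_recr /= Q_nn mulr1; congr (_ + _).
rewrite big_distrl; apply: eq_bigr => i _.
rewrite Q_S; first by rewrite mulrA. by rewrite -ltnS.
Qed.

Lemma Vrec0 n : V n.+1 0 = V n 0 * W n 0.
Proof. by rewrite /= big_ord1 Q_nn mulr1. Qed.

Let lam := 2 * (1 - g).

Lemma nz1 (x : nat) : (0 < x)%N -> (x%:R : C) != 0.
Proof. by move=> h; rewrite pnatr_eq0 -lt0n. Qed.

Lemma nz2 (x : nat) : (0 < x)%N -> (x%:R : C) + lam != 0.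
Proof.
move=> h; have /hnu : (2 <= x.+1)%N by [].
apply: contra => /eqP e; apply/eqP.
have -> : nu = x%:R + lam + nu by rewrite e add0r.
rewrite /lam /g /gch_gamma -addn1 natrD; by field.
Qed.

Lemma two_nz : (2 : C) != 0.
Proof. by rewrite pnatr_eq0. Qed.

Lemma KR n N : let x := (n + 2 * N.+1)%:R : C in
  x * (x + lam) * rr n N = 2 * (x - 2 * g + 2 * a).
Proof.
move=> x.
have h1 := nz1 (n + 2 * N.+1) (ltac:(lia)).
have h2 := nz2 (n + 2 * N.+1) (ltac:(lia)).
have e1 : 1 + n%:R / 2 + N%:R = x / 2 :> C.
  by rewrite /x natrD natrM; by field.
have e2 : 2 - g + n%:R / 2 + N%:R = (x + lam) / 2 :> C.
  by rewrite /x /lam natrD natrM; by field.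
rewrite /rr e1 e2.
have ex : (n%:R / 2 + N%:R : C) = x / 2 - 1.
  by rewrite -e1; ring.
rewrite -addrA ex /lam.
have h2' : x + 2 * (1 - g) != 0 := h2.
move: h1 h2'; rewrite -/x; clearbody x => h1 h2'.
field; rewrite ?h1 ?h2' ?two_nz //.
Qed.

Lemma KW n N : let x := (n.+1 + 2 * N)%:R : C in
  x * (x + lam) * W n N = 2 * (x + 1 - 2 * g + om).
Proof.
move=> x.
have h1 := nz1 (n.+1 + 2 * N) (ltac:(lia)).
have h2 := nz2 (n.+1 + 2 * N) (ltac:(lia)).
have e1 : N%:R + 1 / 2 + n%:R / 2 = x / 2 :> C.
  by rewrite /x natrD natrM -addn1 natrD; by field.
have e2 : N%:R + 3 / 2 - g + n%:R / 2 = (x + lam) / 2 :> C.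
  by rewrite /x /lam natrD natrM -addn1 natrD; by field.
rewrite /rwW -/g e1 e2.
have ex : (N%:R + 1 - g + om / 2 + n%:R / 2 : C) = (x + 1 - 2 * g + om) / 2.
  by rewrite /x natrD natrM -addn1 natrD; by field.
rewrite ex.
have h2' : x + 2 * (1 - g) != 0 := h2.
move: h1 h2'; rewrite -/x /lam; clearbody x => h1 h2'.
field; rewrite ?h1 ?h2' ?two_nz //.
Qed.


Lemma Vkey n N : (0 < n + 2 * N)%N ->
  ((n + 2 * N)%:R : C) * ((n + 2 * N)%:R + lam) * V n N =
  (if N is N'.+1 then 2 * ((n + 2 * N)%:R - 2 * g + 2 * a) * V n N' else 0)
  + (if n is n'.+1 then 2 * ((n + 2 * N)%:R + 1 - 2 * g + om) * V n' N else 0).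
Proof.
case: N => [|N] hm.
  case: n hm => [//|n] _.
  have E : ((n.+1 + 2 * 0)%:R : C) * ((n.+1 + 2 * 0)%:R + lam) * W n 0
     = 2 * ((n.+1 + 2 * 0)%:R + 1 - 2 * g + om) := KW n 0.
  rewrite Vrec0 add0r -E; ring.
have E1 : ((n + 2 * N.+1)%:R : C) * ((n + 2 * N.+1)%:R + lam) * rr n N
     = 2 * ((n + 2 * N.+1)%:R - 2 * g + 2 * a) := KR n N.
rewrite Vrec -E1.
case: n hm E1 => [|n] _ E1.
  by rewrite !addr0; ring.
have E : ((n.+1 + 2 * N.+1)%:R : C) * ((n.+1 + 2 * N.+1)%:R + lam) * W n N.+1
     = 2 * ((n.+1 + 2 * N.+1)%:R + 1 - 2 * g + om) := KW n N.+1.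
rewrite -E; ring.
Qed.


Variable eps : C.
Let e := - (eps / 2).
Let z := - (mu / 2).
Definition G n N := e ^+ n * z ^+ N * V n N.

Lemma Gkey n N : (0 < n + 2 * N)%N ->
  ((n + 2 * N)%:R : C) * ((n + 2 * N)%:R + lam) * G n N =
  (if n is n'.+1 then 2 * e * ((n + 2 * N)%:R + 1 - 2 * g + om) * G n' N else 0)
  + (if N is N'.+1 then 2 * z * ((n + 2 * N)%:R - 2 * g + 2 * a) * G n N' else 0).
Proof.
move=> h; rewrite /G.
transitivity (e ^+ n * z ^+ N * (((n + 2 * N)%:R : C) * ((n + 2 * N)%:R + lam) * V n N)); first by ring.
rewrite Vkey //.
case: n {h} => [|n]; case: N => [|N]; rewrite ?exprS; ring.
Qed.

Definition T m N := if (2 * N <= m)%N then G (m - 2 * N) N else 0.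
Definition T2 j N := if N is N'.+1 then
   (if (2 * N <= j.+1)%N then G (j.+1 - 2 * N) N' else 0) else 0.

Lemma termwise j N :
  ((j.+1)%:R : C) * ((j.+1)%:R + lam) * T j.+1 N =
  2 * e * ((j.+1)%:R + 1 - 2 * g + om) * T j N
  + 2 * z * ((j.+1)%:R - 2 * g + 2 * a) * T2 j N.
Proof.
rewrite /T /T2.
case: (leqP (2 * N) j.+1) => h.
  have [n hn] : exists n, j.+1 = (n + 2 * N)%N by exists (j.+1 - 2 * N)%N; lia.
  rewrite (_ : (j.+1 - 2 * N)%N = n); last by lia.
  rewrite hn Gkey; last by lia.
  case: n hn => [|n] hn.
    rewrite (_ : (2 * N <= j)%N = false); last by lia.
    case: N hn h => [//|N] hn h; ring.
  rewrite (_ : (2 * N <= j)%N = true); last by lia.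
  rewrite (_ : (j - 2 * N)%N = n); last by lia.
  case: N hn h => [|N] hn h; ring.
rewrite (_ : (2 * N <= j)%N = false); last by lia.
case: N h => [//|N] h.
by rewrite !mulr0 addr0.
Qed.

Definition S m := \sum_(N < m.+1) T m N.

Lemma Srec j :
  ((j.+1)%:R : C) * ((j.+1)%:R + lam) * S j.+1 =
  2 * e * ((j.+1)%:R + 1 - 2 * g + om) * S j
  + 2 * z * ((j.+1)%:R - 2 * g + 2 * a) * (if j is i.+1 then S i else 0).
Proof.
rewrite /S mulr_sumr.
under eq_bigr do rewrite termwise.
rewrite big_split /= -!mulr_sumr.
congr (_ * _ + _ * _).
  rewrite big_ord_recr /= /T.
  by rewrite (_ : (2 * j.+1 <= j)%N = false) ?addr0 //; lia.
rewrite big_ord_recl /= add0r.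
case: j => [|i].
  by rewrite big_ord1 /= /T2.
rewrite big_ord_recr /= /bump /=.
rewrite (_ : (2 * (1 + i.+1) <= i.+2)%N = false) ?addr0; last by lia.
apply: eq_bigr => N _; rewrite /T add0n.
rewrite (_ : (2 * (1 + N) <= i.+2)%N = (2 * N <= i)%N); last by apply/idP/idP; lia.
case: ifP => // _.
by rewrite (_ : (i.+2 - 2 * (1 + N))%N = (i - 2 * N)%N); last by lia.
Qed.


Lemma coefE K m : rw_coef mu eps nu Om om K (Posz m) = K * S m.
Proof.
rewrite /rw_coef /S; congr (K * _).
under eq_bigr do rewrite big_mkcond /=.
rewrite exchange_big /=; apply: eq_bigr => N _.
rewrite /T; case: ifP => h.
  rewrite -big_mkcond /=.
  rewrite (eq_bigl (fun n : 'I_m.+1 => (n : nat) == (m - 2 * N)%N)); last first.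
    by move=> n /=; apply/eqP/eqP; lia.
  rewrite (big_ord1_eq _ (fun n : nat => (-(eps/2))^+n * (-(mu/2))^+N * rwV mu nu Om om n N)).
  rewrite (_ : (m - 2 * N < m.+1)%N = true); last by lia.
  by [].

apply: big1 => n _; rewrite ifF //; apply/eqP; lia.
Qed.


Lemma main_aux (hmu : mu != 0) K :
  gch_formal_solution mu eps nu Om om (2 * (1 - gch_gamma nu)) (rw_coef mu eps nu Om om K).
Proof.
move=> k; rewrite /fmulx /fderiv !subrK.
set c := rw_coef mu eps nu Om om K.
case: k => [j|j].
  have -> : Posz j + 1 = Posz j.+1 by lia.
  rewrite /c !coefE.
  have hj : forall n : nat, ((n : int)%:~R : C) = n%:R by [].
  have hc : rw_coef mu eps nu Om om K (Posz j - 1) = K * (if j is i.+1 then S i else 0).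
    case: j => [|i]; first by rewrite mulr0.
    have -> : Posz i.+1 - 1 = Posz i by lia.
    by rewrite coefE.
  rewrite hc intrB !hj.
  have E := Srec j.
  have hOm : Om = 2 * a * mu by rewrite /a /gch_a; field; rewrite hmu.
  rewrite hOm.
  move: E; rewrite /lam /e /z /g.
  clearbody a.
  set S2 := (if j is i.+1 then S i else 0); set s1 := S j.+1; set s0 := S j.
  rewrite -[j.+1]addn1 natrD => E.
  match type of E with ?P = ?Q => match goal with |- ?L = 0 =>
    have H : L = K * (P - Q) by rewrite /gch_gamma; field end end.
  by rewrite H E subrr mulr0.
case: j => [|i].
  have -> : Negz 0 + 1 = 0 by [].
  have -> : Negz 0 - 1 = Negz 1 by [].
  rewrite /c /=. rewrite NegzE intrN /gch_gamma.
  by field.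
have -> : Negz i.+1 + 1 = Negz i by lia.
have -> : Negz i.+1 - 1 = Negz i.+2 by lia.
rewrite /c /=; ring.
Qed.
End S.

Theorem mainTheorem2 (C : numClosedFieldType) (mu eps nu Om om K : C) :
  mu != 0 ->
  (forall n : nat, (2 <= n)%N -> nu != n%:R) ->
  (forall n : nat, 1 - gch_a mu Om != - n%:R) ->
  gch_formal_solution mu eps nu Om om (2 * (1 - gch_gamma nu))
    (rw_coef mu eps nu Om om K).
Proof.
move=> hmu hnu _.
exact: (@main_aux C mu nu Om om hnu eps hmu K).
Qed.
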